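(* Let $G$ be a finitely generated torsion-free nilpotent group and suppose the decomposition $\overline{G}=R_1\times R_2$ into rational subgroups matches the decomposition $G=G_1\times G_2$. Let $X_i=R_iZ(\overline{G})\cap G$ for $i=1,2$. Then $X_i=G_iZ(G)$ for $i=1,2$.
   Context: $\overline{G}$ is the rational closure of $G$ (torsion-free nilpotent, containing $G$, uniquely divisible, each element has a positive power in $G$); for $H\le G$, $\overline{H}$ is the set of elements of $\overline{G}$ having a positive power in $H$. A subgroup is rational if closed under taking all $n$-th roots. A decomposition $\overline{G}=R_1\times R_2$ matches $G=G_1\times G_2$ if $\overline{G_i}\,Z(\overline{G})=R_i\,Z(\overline{G})$ for $i=1,2$. *)

(* Defs.v *)
From Stdlib Require Import List Arith.
Set Implicit Arguments.

Record group := Group {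
  carrier :> Type;
  mul : carrier -> carrier -> carrier;
  one : carrier;
  inv : carrier -> carrier;
  mulA : forall x y z, mul x (mul y z) = mul (mul x y) z;
  mul1g : forall x, mul one x = x;
  mulVg : forall x, mul (inv x) x = one
}.

Section GroupDefs.
Variable T : group.

Definition gset := T -> Prop.

Definition setT : gset := fun _ => True.
Definition set1g : gset := fun x => x = one T.

Definition set_eq (A B : gset) : Prop := forall x, A x <-> B x.
Definition subset (A B : gset) : Prop := forall x, A x -> B x.
Definition setI (A B : gset) : gset := fun x => A x /\ B x.

Fixpoint pow (x : T) (n : nat) : T :=
  match n with 0 => one T | S k => mul T x (pow x k) end.

Definition is_subgroup (H : gset) : Prop :=
  H (one T) /\ (forall x y, H x -> H y -> H (mul T x y)) /\
  (forall x, H x -> H (inv T x)).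

Definition prodset (A B : gset) : gset :=
  fun x => exists a b, A a /\ B b /\ x = mul T a b.

Definition generated (A : gset) : gset :=
  fun x => forall H, is_subgroup H -> subset A H -> H x.

Definition commg (x y : T) : T := mul T (mul T (inv T x) (inv T y)) (mul T x y).

Definition commgroup (A B : gset) : gset :=
  generated (fun z => exists a b, A a /\ B b /\ z = commg a b).

Fixpoint lcs (H : gset) (n : nat) : gset :=
  match n with 0 => H | S k => commgroup (lcs H k) H end.

Definition nilpotent (H : gset) : Prop := exists c, set_eq (lcs H c) set1g.

Definition torsion_free (H : gset) : Prop :=
  forall x n, H x -> 0 < n -> pow x n = one T -> x = one T.

Definition finitely_generated (H : gset) : Prop :=
  exists s : list T, set_eq H (generated (fun x => In x s)).

Definition center (H : gset) : gset :=
  fun z => H z /\ forall x, H x -> mul T z x = mul T x z.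

Definition is_normal (N H : gset) : Prop :=
  forall n h, N n -> H h -> N (mul T (inv T h) (mul T n h)).

Definition is_dprod (K A B : gset) : Prop :=
  is_subgroup A /\ is_subgroup B /\ subset A K /\ subset B K /\
  is_normal A K /\ is_normal B K /\
  set_eq (setI A B) set1g /\ set_eq K (prodset A B).

(* The whole group T is a rational closure of the subgroup G. *)
Definition is_rational_closure_of (G : gset) : Prop :=
  is_subgroup G /\ torsion_free setT /\ nilpotent setT /\
  (forall x n, 0 < n -> exists y, pow y n = x /\
                 forall y', pow y' n = x -> y' = y) /\
  (forall x, exists n, 0 < n /\ G (pow x n)).

Definition rclosure (H : gset) : gset :=
  fun x => exists n, 0 < n /\ H (pow x n).

Definition rational (R : gset) : Prop :=
  is_subgroup R /\ forall x n, 0 < n -> R (pow x n) -> R x.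

End GroupDefs.

(* Main.v *)
Require Import Defs.
From Stdlib Require Import List Arith.

Section GL.
Variable T : group.
Local Notation "x ** y" := (mul T x y) (at level 40).
Local Notation "x ^-" := (inv T x) (at level 2).
Local Notation e := (one T).

Lemma mulgV (x : T) : x ** x ^- = e.
Proof.
  rewrite <- (mul1g T (x ** x ^-)).
  rewrite <- (mulVg T (x ^-)) at 1.
  rewrite <- mulA. rewrite (mulA T x^- x x^-). rewrite mulVg, mul1g. apply mulVg.
Qed.

Lemma mulg1 (x : T) : x ** e = x.
Proof. rewrite <- (mulVg T x), mulA, mulgV. apply mul1g. Qed.

Lemma mulKg (x y : T) : x ^- ** (x ** y) = y.
Proof. rewrite mulA, mulVg. apply mul1g. Qed.

Lemma mulKVg (x y : T) : x ** (x ^- ** y) = y.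
Proof. rewrite mulA, mulgV. apply mul1g. Qed.

Lemma inv_uniq (a b : T) : a ** b = e -> a = b ^-.
Proof.
  intro H. rewrite <- (mulg1 a), <- (mulgV b), mulA, H. apply mul1g.
Qed.

Lemma inv_uniq_r (a b : T) : a ** b = e -> b = a ^-.
Proof. intro H. rewrite <- (mulKg a b), H. apply mulg1. Qed.

Lemma invgK (x : T) : (x ^-) ^- = x.
Proof. symmetry. apply inv_uniq. apply mulgV. Qed.

Lemma invM (x y : T) : (x ** y) ^- = y ^- ** x ^-.
Proof.
  symmetry. apply inv_uniq. rewrite <- !mulA. rewrite (mulKg x y). apply mulVg.
Qed.

Lemma pow_conj (z x : T) n : pow T (z ^- ** (x ** z)) n = z ^- ** (pow T x n ** z).
Proof.
  induction n; simpl.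
  - rewrite mul1g. symmetry. apply mulVg.
  - rewrite IHn. rewrite <- !mulA. f_equal. f_equal. rewrite mulKVg. reflexivity.
Qed.

Definition Z := center (setT T).

Lemma Zmul a b : Z a -> Z b -> Z (a ** b).
Proof.
  intros [_ Ha] [_ Hb]. split. exact I. intros x _.
  rewrite <- mulA, (Hb x I), mulA, (Ha x I), mulA. reflexivity.
Qed.

Lemma Zinv a : Z a -> Z (a ^-).
Proof.
  intros [_ Ha]. split. exact I. intros x _.
  rewrite <- (mulKg a (x ** a^-)). rewrite (mulA T a x). rewrite (Ha x I).
  rewrite <- (mulA T x a). rewrite mulgV, mulg1. reflexivity.
Qed.

Lemma Zone : Z e.
Proof. split. exact I. intros. rewrite mul1g, mulg1. reflexivity. Qed.

Lemma dprod_comm (K A B : gset T) a b :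
  is_dprod K A B -> A a -> B b -> a ** b = b ** a.
Proof.
  intros (HA & HB & SA & SB & NA & NB & I1 & _) Ha Hb.
  destruct HA as (_ & MA & IA). destruct HB as (_ & MB & IB).
  assert (Hc : (a ^- ** b ^-) ** (a ** b) = e).
  { apply I1. split.
    - rewrite <- mulA. apply MA; [apply IA; auto | apply NA; auto].
    - rewrite <- (mulA T a^- b^- (a ** b)). rewrite (mulA T b^- a b).
      rewrite (mulA T a^- (b^- ** a) b). apply MB; [apply NB; auto | auto]. }
  apply inv_uniq_r in Hc. rewrite invM, !invgK in Hc. exact Hc.
Qed.

Lemma dprod_sym (K A B : gset T) : is_dprod K A B -> is_dprod K B A.
Proof.
  intro D. pose proof D as (HA & HB & SA & SB & NA & NB & I1 & P).
  refine (conj HB (conj HA (conj SB (conj SA (conj NB (conj NA (conj _ _))))))).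
  - intro x. split.
    + intros [h1 h2]. apply I1. split; auto.
    + intro Hx. apply I1 in Hx. destruct Hx; split; auto.
  - intro x. split.
    + intro Kx. apply P in Kx. destruct Kx as (a & b & Ha & Hb & ->).
      exists b, a. repeat split; auto. apply (@dprod_comm K A B _ _ D); auto.
    + intros (b & a & Hb & Ha & ->). apply P. exists a, b. repeat split; auto.
      symmetry. apply (@dprod_comm K A B _ _ D); auto.
Qed.

Lemma part1 (G G1 G2 R1 R2 : gset T) :
  is_subgroup G -> is_rational_closure_of G ->
  is_dprod (setT T) R1 R2 -> is_dprod G G1 G2 ->
  set_eq (prodset (rclosure G1) Z) (prodset R1 Z) ->
  set_eq (prodset (rclosure G2) Z) (prodset R2 Z) ->
  set_eq (setI (prodset R1 Z) G) (prodset G1 (center G)).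
Proof.
  intros HG Hrc DR DG E1 E2.
  pose proof DR as (HR1 & HR2 & _ & _ & _ & _ & _ & PR).
  pose proof DG as (HG1 & HG2 & SG1 & SG2 & _ & _ & _ & PG).
  destruct Hrc as (_ & _ & _ & Hroot & Hpow).
  destruct HG as (G1e & GM & GI).
  assert (F1 : forall z, center G z -> Z z).
  { intros z [Gz Hz]. split. exact I. intros x _.
    destruct (Hpow x) as (n & Hn & Gxn).
    destruct (Hroot (pow T x n) n Hn) as (y0 & _ & Hu).
    assert (E : z ^- ** (x ** z) = x).
    { assert (P1 : pow T (z ^- ** (x ** z)) n = pow T x n).
      { rewrite pow_conj, <- (Hz _ Gxn). apply mulKg. }
      rewrite (Hu _ P1). symmetry. apply Hu. reflexivity. }
    rewrite <- E at 1. rewrite mulKVg. reflexivity. }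
  assert (GR : forall (Gi Ri : gset T), set_eq (prodset (rclosure Gi) Z) (prodset Ri Z) ->
            forall g, Gi g -> prodset Ri Z g).
  { intros Gi Ri Ei g Hg. apply Ei. exists g, e. split; [|split; [exact Zone|]].
    - exists 1. split. auto. simpl. rewrite mulg1. exact Hg.
    - rewrite mulg1. reflexivity. }
  assert (F3 : forall y, prodset R1 Z y -> prodset R2 Z y -> Z y).
  { intros y (r1 & z & Hr1 & Hz & ->) (r2 & z' & Hr2 & Hz' & Hy).
    apply Zmul; auto. split. exact I. intros w _.
    assert (Er : r1 = r2 ** (z' ** z ^-)).
    { rewrite mulA, <- Hy, <- mulA, mulgV, mulg1. reflexivity. }
    assert (Wz : Z (z' ** z ^-)) by (apply Zmul; auto; apply Zinv; auto).
    destruct (proj1 (PR w) I) as (a & b & Ha & Hb & ->).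
    assert (C1 : r1 ** a = a ** r1).
    { rewrite Er. set (w := z' ** z ^-) in *.
      rewrite <- (mulA T r2 w a), (proj2 Wz a I), (mulA T r2 a w), (mulA T a r2 w).
      rewrite (@dprod_comm (setT T) _ _ _ _ DR Ha Hr2). reflexivity. }
    rewrite mulA, C1, <- mulA, (@dprod_comm (setT T) _ _ _ _ DR Hr1 Hb), mulA. reflexivity. }
  intro x. split.
  - intros [Hx Gx]. destruct (proj1 (PG x) Gx) as (g1 & g2 & H1 & H2 & ->).
    exists g1, g2. split; [auto|split; [|reflexivity]]. split; [auto|].
    assert (Zg2 : Z g2).
    { apply F3; [| apply (GR G2 R2 E2); auto].
      destruct (GR G1 R1 E1 g1 H1) as (r & z & Hr & Hz & Eg).
      destruct Hx as (r' & z' & Hr' & Hz' & Ex).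
      exists (r ^- ** r'), (z ^- ** z'). split; [|split].
      - apply (proj2 (proj2 HR1)) in Hr. apply (proj1 (proj2 HR1)); auto.
      - apply Zmul; auto. apply Zinv; auto.
      - rewrite <- (mulKg g1 g2). rewrite Ex, Eg, invM.
        rewrite (proj2 (Zinv z Hz) (r ^-) I).
        rewrite <- !mulA. f_equal. rewrite (mulA T z^- r' z').
        rewrite (proj2 (Zinv z Hz) r' I). rewrite <- mulA. reflexivity. }
    intros y _. apply (proj2 Zg2 y I).
  - intros (g1 & z & H1 & [Gz Hz] & ->). split.
    + destruct (GR G1 R1 E1 g1 H1) as (r & z1 & Hr & Hz1 & ->).
      exists r, (z1 ** z). split; [auto|split].
      apply Zmul; auto. apply F1. split; auto.
      rewrite <- mulA. reflexivity.
    + apply GM; auto.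
Qed.

End GL.

Theorem mainTheorem11 (Gbar : group) (G G1 G2 R1 R2 : gset Gbar) :
  is_subgroup G -> finitely_generated G -> torsion_free G -> nilpotent G ->
  is_rational_closure_of G ->
  rational R1 -> rational R2 -> is_dprod (setT Gbar) R1 R2 ->
  is_dprod G G1 G2 ->
  set_eq (prodset (rclosure G1) (center (setT Gbar)))
         (prodset R1 (center (setT Gbar))) ->
  set_eq (prodset (rclosure G2) (center (setT Gbar)))
         (prodset R2 (center (setT Gbar))) ->
  set_eq (setI (prodset R1 (center (setT Gbar))) G) (prodset G1 (center G)) /\
  set_eq (setI (prodset R2 (center (setT Gbar))) G) (prodset G2 (center G)).
Proof.
  intros HG _ _ _ Hrc _ _ DR DG E1 E2. split.
  - exact (part1 _ _ _ _ _ _ HG Hrc DR DG E1 E2).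
  - exact (part1 _ _ _ _ _ _ HG Hrc (dprod_sym _ _ _ _ DR) (dprod_sym _ _ _ _ DG) E2 E1).
Qed.
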